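(* Let $E,F$ be normed spaces over $\mathbb K$, $F$ spherically complete, and $f\colon E\to F$ a linear isometry. Let $S$ be the set of linear subspaces $M\subseteq F$ with $\operatorname{Im}(f)\subseteq M$ such that the inclusion $\operatorname{Im}(f)\hookrightarrow M$ is immediate. Then (1) $S$ has a maximal element with respect to inclusion; (2) for any maximal element $\breve E$ of $S$, the space $\breve E$ together with the linear isometry $E\to\breve E$, $x\mapsto f(x)$, is a spherical completion of $E$.
   Context: $\mathbb K$: nontrivially normed field with ultrametric absolute value; normed space over $\mathbb K$: normed vector space with $\|x+y\|\le\max(\|x\|,\|y\|)$. $x\perp_m V$ means $\|x\|=\inf_{v\in V}\|x-v\|$. A linear isometry $f\colon E\to F$ is immediate if the only $v\in F$ with $v\perp_m\operatorname{Im}(f)$ is $0$. Spherically complete: every decreasing sequence of closed balls (radii $\ge0$) has nonempty intersection. A spherical completion of $E$ is a spherically complete normed space $\breve E$ over $\mathbb K$ with a linear isometry $i\colon E\to\breve E$ such that no proper spherically complete linear subspace of $\breve E$ contains $i(E)$. *)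

(* Defs.v *)
From HB Require Import structures.
From mathcomp Require Import all_boot all_order all_algebra.
From mathcomp Require Import boolp classical_sets reals.
Set Implicit Arguments. Unset Strict Implicit. Unset Printing Implicit Defensive.
Import Order.TTheory GRing.Theory Num.Theory.
Local Open Scope ring_scope.
Local Open Scope classical_set_scope.

Section Defs.
Variable R : realType.

Definition ultra_abs (K : fieldType) (a : K -> R) : Prop :=
  [/\ (forall x, 0 <= a x), (forall x, a x = 0 <-> x = 0),
      (forall x y, a (x * y) = a x * a y) &
      (forall x y, a (x + y) <= Num.max (a x) (a y))].

Definition nontrivial_abs (K : fieldType) (a : K -> R) : Prop :=
  exists x, a x <> 0 /\ a x <> 1.

Definition ultra_norm (K : fieldType) (a : K -> R) (V : lmodType K)
    (nrm : V -> R) : Prop :=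
  [/\ (forall x, nrm x = 0 <-> x = 0),
      (forall (c : K) x, nrm (c *: x) = a c * nrm x) &
      (forall x y, nrm (x + y) <= Num.max (nrm x) (nrm y))].

Definition lin_subspace (K : fieldType) (V : lmodType K) (M : set V) : Prop :=
  [/\ M 0, (forall x y, M x -> M y -> M (x + y)) &
      (forall (c : K) x, M x -> M (c *: x))].

Definition cball_in (K : fieldType) (V : lmodType K) (nrm : V -> R)
    (M : set V) (c : V) (r : R) : set V :=
  [set x | M x /\ nrm (x - c) <= r].

Definition sph_complete (K : fieldType) (V : lmodType K) (nrm : V -> R)
    (M : set V) : Prop :=
  forall (c : nat -> V) (r : nat -> R),
    (forall n, M (c n)) -> (forall n, 0 <= r n) ->
    (forall n, cball_in nrm M (c n.+1) (r n.+1) `<=` cball_in nrm M (c n) (r n)) ->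
    exists x, forall n, cball_in nrm M (c n) (r n) x.

Definition orth_m (K : fieldType) (V : lmodType K) (nrm : V -> R)
    (x : V) (W : set V) : Prop :=
  nrm x = inf [set nrm (x - w) | w in W].

Definition immediate_incl (K : fieldType) (V : lmodType K) (nrm : V -> R)
    (W M : set V) : Prop :=
  forall v, M v -> orth_m nrm v W -> v = 0.

Definition sph_completion (K : fieldType) (E F : lmodType K)
    (nE : E -> R) (nF : F -> R) (f : E -> F) (M : set F) : Prop :=
  [/\ lin_subspace M, (forall x, M (f x)), linear f,
      (forall x, nF (f x) = nE x) & sph_complete nF M] /\
      (forall N, lin_subspace N -> N `<=` M -> range f `<=` N ->
         sph_complete nF N -> N = M).

End Defs.

(* Main.v *)
Require Import Defs.
From HB Require Import structures.
From mathcomp Require Import all_boot all_order all_algebra.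
From mathcomp Require Import boolp classical_sets reals.
From mathcomp Require Import ring.
Import Order.TTheory GRing.Theory Num.Theory.
Local Open Scope ring_scope.
Local Open Scope classical_set_scope.

Set Default Proof Using "All".
Section Basic.
Variables (R : realType) (K : fieldType) (a : K -> R) (F : lmodType K) (nF : F -> R).
Hypotheses (ha : ultra_abs a) (hF : ultra_norm a nF).

Lemma a1 : a 1 = 1.
Proof.
case: ha => a0 aeq amul _.
have h : a 1 * a 1 = a 1 * 1 by rewrite -amul mulr1 mulr1.
apply: (mulfI _ h); apply/eqP => /aeq; apply/eqP; exact: oner_neq0.
Qed.

Lemma aN1 : a (-1) = 1.
Proof.
case: ha => a0 aeq amul _.
have h : a (-1) * a (-1) = 1 by rewrite -amul mulrNN mulr1 a1.
have := a0 (-1); move: h; set t := a (-1) => h t0.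
have : (t - 1) * (t + 1) = 0.
  have -> : (t - 1) * (t + 1) = t * t - 1 by ring.
  by rewrite h subrr.
move/eqP; rewrite mulf_eq0 => /orP[/eqP|/eqP]; first by move/subr0_eq.
move=> ht; have : 0 < t + 1 by rewrite ltr_wpDl.
by rewrite ht ltxx.
Qed.

Lemma n0 : nF 0 = 0.
Proof. by case: hF => h _ _; apply/h. Qed.

Lemma nN x : nF (- x) = nF x.
Proof. by case: hF => _ hs _; rewrite -scaleN1r hs aN1 mul1r. Qed.

Lemma nB x y : nF (x - y) = nF (y - x).
Proof. by rewrite -nN opprB. Qed.

Lemma nD x y : nF (x + y) <= Num.max (nF x) (nF y).
Proof. by case: hF. Qed.

Lemma nge0 x : 0 <= nF x.
Proof. by have := nD x (- x); rewrite subrr n0 nN maxxx. Qed.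

Lemma ngt0 x : x <> 0 -> 0 < nF x.
Proof.
move=> hx; rewrite lt_def nge0 andbT; apply/eqP => h.
by case: hF => h0 _ _; apply: hx; apply/h0.
Qed.

Lemma nZ c x : nF (c *: x) = a c * nF x.
Proof. by case: hF. Qed.

Lemma ntri x y z r : nF (x - y) <= r -> nF (y - z) <= r -> nF (x - z) <= r.
Proof.
move=> h1 h2; have := nD (x - y) (y - z); rewrite addrA subrK => h.
by apply: (le_trans h); rewrite ge_max h1 h2.
Qed.

Lemma ntri_lt x y z r : nF (x - y) < r -> nF (y - z) < r -> nF (x - z) < r.
Proof.
move=> h1 h2; have := nD (x - y) (y - z); rewrite addrA subrK => h.
by apply: (le_lt_trans h); rewrite gt_max h1 h2.
Qed.

Lemma ndom x y : nF (x - y) < nF x -> nF x <= nF y.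
Proof.
move=> h; have := nD (x - y) y; rewrite subrK le_max => /orP[h'|//].
by move: (le_lt_trans h' h); rewrite ltxx.
Qed.

Lemma has_inf_n v (W : set F) : W 0 -> has_inf [set nF (v - w) | w in W].
Proof.
move=> W0; split; first by exists (nF (v - 0)), 0.
by exists 0 => _ [w _ <-]; exact: nge0.
Qed.

Lemma orthP v (W : set F) : W 0 ->
  orth_m nF v W <-> (forall w, W w -> nF v <= nF (v - w)).
Proof.
move=> W0; rewrite /orth_m; split.
  move=> -> w Ww; have [_ hl] := has_inf_n v _ W0.
  by apply: (ge_inf hl); exists w.
move=> h; apply/eqP; rewrite eq_le; apply/andP; split.
  apply: lb_le_inf; first by exists (nF (v - 0)), 0.
  by move=> _ [w Ww <-]; exact: h.
have [_ hl] := has_inf_n v _ W0.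
by rewrite -{2}(subr0 v); apply: (ge_inf hl); exists 0.
Qed.

Lemma imm_ex (W M : set F) v : W 0 -> immediate_incl nF W M -> M v -> v <> 0 ->
  exists2 w, W w & nF (v - w) < nF v.
Proof.
move=> W0 hi Mv v0; apply: contrapT => hn; apply: v0; apply: hi => //.
apply/(orthP v _ W0) => w Ww; rewrite leNgt; apply/negP => hlt; apply: hn; by exists w.
Qed.

Lemma ex_imm (W M : set F) : W 0 ->
  (forall v, M v -> v <> 0 -> exists2 w, W w & nF (v - w) < nF v) ->
  immediate_incl nF W M.
Proof.
move=> W0 h v Mv /(orthP v _ W0) ho; apply: contrapT => v0.
have [w Ww hw] := h v Mv v0; have := ho w Ww; by rewrite leNgt hw.
Qed.

End Basic.
Arguments n0 {R K a F nF}.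
Arguments nN {R K a F nF}.
Arguments nB {R K a F nF}.
Arguments nD {R K a F nF}.
Arguments nge0 {R K a F nF}.
Arguments ngt0 {R K a F nF}.
Arguments nZ {R K a F nF}.
Arguments ntri {R K a F nF}.
Arguments ntri_lt {R K a F nF}.
Arguments ndom {R K a F nF}.
Arguments has_inf_n {R K a F nF}.
Arguments orthP {R K a F nF}.
Arguments imm_ex {R K a F nF}.
Arguments ex_imm {R K a F nF}.


Section Approx.
Variables (R : realType) (K : fieldType) (a : K -> R) (F : lmodType K) (nF : F -> R).
Hypotheses (ha : ultra_abs a) (hF : ultra_norm a nF).

Lemma best_approx (N : set F) v : lin_subspace N -> sph_complete nF N ->
  exists2 x, N x & forall w, N w -> nF (v - x) <= nF (v - w).
Proof.
move=> [N0 ND NZ] hsc.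
have hD := has_inf_n ha hF v N N0.
set d := inf [set nF (v - w) | w in N] in hD *.
have d0 : 0 <= d.
  apply: lb_le_inf; first by exists (nF (v - 0)), 0.
  by move=> _ [w _ <-]; exact: nge0 ha hF _.
have ep : forall n : nat, 0 < (n.+1%:R : R)^-1 by move=> n; rewrite invr_gt0 ltr0Sn.
have hc : forall n : nat, exists w, N w /\ nF (v - w) < d + n.+1%:R^-1.
  move=> n; have [_ [w Nw <-] he] := inf_adherent (ep n) hD.
  by exists w.
have [c hc'] := choice hc.
pose r n := d + (n.+1%:R : R)^-1.
have rdec : forall n, r n.+1 <= r n.
  move=> n; rewrite /r lerD2l lef_pV2 ?posrE ?ltr0Sn // ler_nat; exact: leqnSn.
have nest : forall n, cball_in nF N (c n.+1) (r n.+1) `<=` cball_in nF N (c n) (r n).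
  move=> n y [Ny hy]; split => //.
  apply: (ntri ha hF _ (c n.+1)); first exact: le_trans hy (rdec n).
  apply: (ntri ha hF _ (v)).
    by rewrite (nB ha hF); apply: ltW; apply: lt_le_trans (hc' n.+1).2 (rdec n).
  exact: ltW (hc' n).2.
have [x hx] := hsc c r (fun n => (hc' n).1) (fun n => addr_ge0 d0 (ltW (ep n))) nest.
exists x; first by have [] := hx 0%N.
move=> w Nw.
have hle : nF (v - x) <= d.
  rewrite leNgt; apply/negP => hlt; have [k hk] := ltr_add_invr hlt.
  have : nF (v - x) <= r k.
    apply: (ntri ha hF _ (c k)); first exact: ltW (hc' k).2.
    by rewrite (nB ha hF); have [] := hx k.
  by rewrite leNgt hk.
apply: le_trans hle _; apply: (ge_inf hD.2); by exists w.
Qed.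

Lemma minimal_sub (W M N : set F) : W 0 -> immediate_incl nF W M ->
  lin_subspace M -> lin_subspace N -> N `<=` M -> W `<=` N ->
  sph_complete nF N -> N = M.
Proof.
move=> W0 hi [M0 MD MZ] lsN NM WN hsc; apply/seteqP; split => // v Mv.
have [x Nx hx] := best_approx N v lsN hsc.
have u0 : v - x = 0.
  apply: hi; first by apply: MD => //; rewrite -scaleN1r; apply: MZ; exact: NM.
  apply/(orthP ha hF _ _ W0) => w Ww.
  rewrite -addrA -opprD; apply: hx.
  by case: lsN => _ ND _; apply: ND => //; exact: WN.
by rewrite (subr0_eq u0).
Qed.

End Approx.


Section MaxSph.
Variables (R : realType) (K : fieldType) (a : K -> R) (F : lmodType K) (nF : F -> R).
Hypotheses (ha : ultra_abs a) (hF : ultra_norm a nF).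

Lemma maximal_sph (W M : set F) : W 0 -> W `<=` M -> lin_subspace M ->
  immediate_incl nF W M -> sph_complete nF setT ->
  (forall N, lin_subspace N -> W `<=` N -> immediate_incl nF W N -> M `<=` N -> N = M) ->
  sph_complete nF M.
Proof.
move=> W0 WM [M0 MD MZ] hi hsc maxM c r Mc r0 nest.
apply: contrapT => hno.
have nest2 : forall n k, (k <= n)%N ->
    cball_in nF M (c n) (r n) `<=` cball_in nF M (c k) (r k).
  elim=> [|n IH] k; first by rewrite leqn0 => /eqP ->.
  rewrite leq_eqVlt => /orP[/eqP -> //|hk] y hy.
  by apply: (IH k hk); exact: nest.
have cin : forall n k, (k <= n)%N -> nF (c n - c k) <= r k.
  move=> n k hk; have [] // := nest2 n k hk (c n).
  by split => //; rewrite subrr (n0 ha hF); exact: r0.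
pose s := fix s (n : nat) : R := if n is m.+1 then Num.min (s m) (r n) else r 0%N.
have sge : forall n (y : R), (forall k, (k <= n)%N -> y <= r k) -> y <= s n.
  elim=> [|n IH] y h; first exact: h.
  rewrite /= le_min; apply/andP; split; last exact: h.
  by apply: IH => k hk; apply: h; exact: leqW.
have sdec : forall n, s n.+1 <= s n by move=> n; rewrite /= ge_min lexx.
have sle : forall n, s n <= r n.
  by case=> [|n] //=; rewrite ge_min lexx orbT.
have s0 : forall n, 0 <= s n by move=> n; apply: sge => k _; exact: r0.
have cs : forall n, nF (c n.+1 - c n) <= s n.
  move=> n; apply: sge => k hk.
  apply: (ntri ha hF _ (c k)); first by apply: cin; exact: leqW.
  by rewrite (nB ha hF); exact: cin.
have nest' : forall n, cball_in nF setT (c n.+1) (s n.+1) `<=` cball_in nF setT (c n) (s n).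
  move=> n y [_ hy]; split => //.
  apply: (ntri ha hF _ (c n.+1)); first exact: le_trans hy (sdec n).
  exact: cs.
have [y0 hy0] := hsc c s (fun _ => I) s0 nest'.
have key : forall m1, M m1 -> exists2 m2, M m2 & nF (y0 - m2) < nF (y0 - m1).
  move=> m1 Mm1; apply: contrapT => hk; apply: hno; exists m1 => n; split => //.
  rewrite leNgt; apply/negP => hlt; apply: hk; exists (c n) => //.
  have h1 : nF (y0 - c n) < nF (m1 - c n).
    have [_ h] := hy0 n; apply: le_lt_trans h _; exact: le_lt_trans (sle n) hlt.
  have e : m1 - c n - (m1 - y0) = y0 - c n by rewrite opprB addrC addrA subrK.
  have := ndom ha hF (m1 - c n) (m1 - y0); rewrite e => /(_ h1) h2.
  by apply: lt_le_trans h1 _; rewrite (nB ha hF y0).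
have ny0 : ~ M y0.
  move=> My0; have [m2 _] := key y0 My0; rewrite subrr (n0 ha hF) ltNge.
  by rewrite (nge0 ha hF).
pose M' := [set z | exists m l, M m /\ z = m + l *: y0].
have lsM' : lin_subspace M'.
  split.
  - by exists 0, 0; split => //; rewrite scale0r addr0.
  - move=> x y [m1 [l1 [M1 ->]]] [m2 [l2 [M2 ->]]]; exists (m1 + m2), (l1 + l2).
    by split; [exact: MD | rewrite scalerDl addrACA].
  - move=> k x [m [l [Mm ->]]]; exists (k *: m), (k * l).
    by split; [exact: MZ | rewrite scalerDr scalerA].
have MM' : M `<=` M' by move=> x Mx; exists x, 0; split => //; rewrite scale0r addr0.
have imm' : immediate_incl nF W M'.
  apply: (ex_imm ha hF) => // v [m0 [l [Mm0 ->]]] v0.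
  have [m Mm hlt] : exists2 m, M m & nF (m0 + l *: y0 - m) < nF (m0 + l *: y0).
    case: (eqVneq l 0) => [l0 | l0].
      move: v0; rewrite l0 scale0r addr0 => v0; exists m0 => //.
      by rewrite subrr (n0 ha hF); exact: ngt0 ha hF _ v0.
    have Mm1 : M (- (l^-1 *: m0)) by rewrite -scaleN1r; exact: MZ (MZ _ _ Mm0).
    have [m2 Mm2 hm2] := key _ Mm1.
    exists (m0 + l *: m2); first by apply: (MD) => //; exact: MZ.
    have e1 : m0 + l *: y0 - (m0 + l *: m2) = l *: (y0 - m2).
      by rewrite scalerBr opprD addrACA subrr add0r.
    have e2 : m0 + l *: y0 = l *: (y0 - - (l^-1 *: m0)).
      by rewrite opprK scalerDr scalerA mulfV // scale1r addrC.
    have al : 0 < a l.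
      case: ha => a0 aeq _ _; rewrite lt_def a0 andbT; apply/eqP => /aeq.
      by apply/eqP.
    by rewrite e1 e2 !(nZ ha hF) ltr_pM2l.
  have hvm := ndom ha hF _ _ hlt.
  have m0' : m <> 0.
    move=> m0'; move: hvm; rewrite m0' (n0 ha hF) leNgt.
    by rewrite (ngt0 ha hF _ v0).
  have [w Ww hw] := imm_ex ha hF W M m W0 hi Mm m0'.
  exists w => //.
  apply: (ntri_lt ha hF _ m) => //.
  apply: lt_le_trans hw _; apply: (ndom ha hF).
  by rewrite (nB ha hF); apply: lt_le_trans hlt hvm.
have eM := maxM M' lsM' (fun x Wx => MM' x (WM x Wx)) imm' MM'.
apply: ny0; rewrite -eM; exists 0, 1; split => //; by rewrite add0r scale1r.
Qed.

End MaxSph.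


Section ZornPart.
Variables (R : realType) (K : fieldType) (a : K -> R) (F : lmodType K) (nF : F -> R).
Hypotheses (ha : ultra_abs a) (hF : ultra_norm a nF).
Variable W : set F.
Hypothesis lsW : lin_subspace W.

Let SS := fun M : set F => lin_subspace M /\ W `<=` M /\ immediate_incl nF W M.

Lemma SS_W : SS W.
Proof.
split => //; split => // v Wv /(orthP ha hF v W (let: And3 h _ _ := lsW in h)) h.
have := h v Wv; rewrite subrr (n0 ha hF) => hv.
case: hF => h0 _ _; apply/h0; apply/eqP; rewrite eq_le hv; exact: nge0 ha hF v.
Qed.

Lemma union_SS (C : set (set F)) : (forall Z, C Z -> SS Z) ->
  total_on C subset -> C !=set0 -> SS (\bigcup_(Z in C) Z).
Proof.
move=> CS tot [Z0 CZ0]; have [[M0 _ _] [WZ0 _]] := CS Z0 CZ0.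
have two : forall x y, (\bigcup_(Z in C) Z) x -> (\bigcup_(Z in C) Z) y ->
    exists2 Z, C Z & Z x /\ Z y.
  move=> x y [Z1 C1 x1] [Z2 C2 y2]; have [h|h] := tot Z1 Z2 C1 C2.
    by exists Z2 => //; split => //; exact: h.
  by exists Z1 => //; split => //; exact: h.
split; [split|split].
- by exists Z0 => //.
- move=> x y hx hy; have [Z CZ [Zx Zy]] := two x y hx hy.
  by exists Z => //; have [[_ ZD _] _] := CS Z CZ; exact: ZD.
- move=> k x [Z CZ Zx]; exists Z => //; have [[_ _ ZZ] _] := CS Z CZ; exact: ZZ.
- by move=> x Wx; exists Z0 => //; exact: WZ0.
- move=> v [Z CZ Zv] ho; have [_ [_ hi]] := CS Z CZ; exact: hi.
Qed.

Lemma exists_max : exists M, SS M /\ forall N, SS N -> M `<=` N -> N = M.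
Proof.
pose T := {M : set F | SS M}.
pose Rl (A B : T) := `[< sval A `<=` sval B >].
have [| | | |t ht] := @Zorn T Rl.
- by move=> ?; apply/asboolP.
- by move=> ? ? ? /asboolP h1 /asboolP h2; apply/asboolP; exact: subset_trans h2.
- by move=> [A PA] [B PB] /asboolP AB /asboolP BA; exact/eq_exist/seteqP.
- move=> A tot.
  pose C := [set Z | Z = W \/ exists2 X, A X & sval X = Z].
  have CS : forall Z, C Z -> SS Z.
    by move=> Z [->|[X _ <-]]; [exact: SS_W | exact: proj2_sig X].
  have totC : total_on C subset.
    move=> Z1 Z2 C1 C2.
    have hW : forall Z, C Z -> W `<=` Z by move=> Z /CS [_ []].
    case: C1 => [->|[X1 AX1 <-]]; first by left; exact: hW.
    case: C2 => [->|[X2 AX2 <-]]; first by right; apply: hW; right; exists X1.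
    by have [/asboolP|/asboolP] := tot X1 X2 AX1 AX2; [left|right].
  have HU := union_SS C CS totC (ex_intro _ W (or_introl erefl)).
  exists (exist _ _ HU) => s As; apply/asboolP => x sx.
  by exists (sval s) => //; right; exists s.
- exists (sval t); split; first exact: proj2_sig t.
  move=> N HN tN.
  have /(congr1 sval) := ht (exist _ N HN) (asboolT tN).
  by [].
Qed.

End ZornPart.



Theorem proposition6p3 (R : realType) (K : fieldType) (a : K -> R)
  (E F : lmodType K) (nE : E -> R) (nF : F -> R) (f : {linear E -> F}) :
  ultra_abs a -> nontrivial_abs a ->
  ultra_norm a nE -> ultra_norm a nF ->
  sph_complete nF setT ->
  (forall x, nF (f x) = nE x) ->
  let S := [set M : set F | lin_subspace M /\ range f `<=` M /\
                            immediate_incl nF (range f) M] in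
  (exists M, S M /\ forall N, S N -> M `<=` N -> N = M) /\
  (forall M, S M -> (forall N, S N -> M `<=` N -> N = M) ->
     sph_completion nE nF f M).
Proof.
move=> ha _ hE hF hsc hiso S.
have W0 : range f 0 by exists 0 => //; rewrite linear0.
have lsW : lin_subspace (range f).
  split => //.
  - by move=> _ _ [u _ <-] [u' _ <-]; exists (u + u') => //; rewrite linearD.
  - by move=> k _ [u _ <-]; exists (k *: u) => //; rewrite linearZ.
split; first exact: (@exists_max _ _ _ _ _ ha hF _ lsW).
move=> M [lsM [WM hiM]] maxM; split.
  split => //.
  - by move=> x; apply: WM; exists x.
  - exact: linearP.
  - apply: (@maximal_sph _ _ _ _ _ ha hF _ _ W0 WM lsM hiM hsc).
    by move=> N lsN WN hiN MN; apply: maxM => //; split.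
move=> N lsN NM WN scN; exact: (@minimal_sub _ _ _ _ _ ha hF _ _ _ W0 hiM lsM lsN NM WN scN).
Qed.
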